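(* Assume the setting and the CRAIG recurrence described in the context, and let $k\ge1$ be such that $q_1,\dots,q_k$, $v_1,\dots,v_k$, $t_1,\dots,t_k$, $r_1,\dots,r_k$, $\alpha_1,\dots,\alpha_k$, $\beta_2,\dots,\beta_k$ and $g_k$ are defined. Define $Q_k=[q_1,\dots,q_k]$, $V_k=[v_1,\dots,v_k]$, $T_k=[t_1,\dots,t_k]$, $D_k=[r_1/\alpha_1,\dots,r_k/\alpha_k]$, and let $B_k\in\mathbb{R}^{k\times k}$ be upper bidiagonal with diagonal entries $(B_k)_{ii}=\alpha_i$ and superdiagonal entries $(B_k)_{i,i+1}=\beta_{i+1}$. Then $Q_k=D_kB_k$, $AQ_k=MV_kB_k$, $CQ_k=T_kB_k$, $V_k^TMV_k+D_k^TT_k=I_k$, $Q_k^TNQ_k=I_k$, and $A^TV_k+T_k=NQ_kB_k^T+Ng_ke_k^T$, where $e_k$ is the $k$-th unit vector in $\mathbb{R}^k$. Consequently, with $S=A^TM^{-1}A+C$, $N^{-1}SQ_k=Q_k(B_k^TB_k)+\alpha_k g_ke_k^T$, i.e. the recurrence implicitly performs the Lanczos tridiagonalization of the preconditioned Schur complement.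
   Context: Setting: $M\in\mathbb{R}^{m\times m}$ is symmetric positive definite, $A\in\mathbb{R}^{m\times n}$ ($n\le m$) has full column rank, $C\in\mathbb{R}^{n\times n}$ is symmetric positive semidefinite, $b\in\mathbb{R}^n$ is nonzero, and $N\in\mathbb{R}^{n\times n}$ is symmetric positive definite (the preconditioner). For a symmetric positive definite $G$ write $\|x\|_G=(x^TGx)^{1/2}$. The generalized saddle point system is $Mu+Ap=0$, $A^Tu-Cp=b$, with unique solution $(u_*,p_* )$; $S=A^TM^{-1}A+C$. CRAIG recurrence (exact arithmetic): Initialization: $\beta_1=\|b\|_{N^{-1}}$, $q_1=N^{-1}b/\beta_1$, $r_1=q_1$, $w_1=M^{-1}Aq_1$, $s_1=Cr_1$, $\alpha_1=(w_1^TMw_1+r_1^Ts_1)^{1/2}$, $v_1=w_1/\alpha_1$, $t_1=s_1/\alpha_1$, $\zeta_1=\beta_1/\alpha_1$, $u^{(1)}=\zeta_1v_1$, $p^{(1)}=-(\zeta_1/\alpha_1)r_1$. For $k=1,2,\dots$: $g_k=N^{-1}(A^Tv_k+t_k)-\alpha_kq_k$, $\beta_{k+1}=\|g_k\|_N$; if $\beta_{k+1}=0$ the recurrence stops; otherwise $q_{k+1}=g_k/\beta_{k+1}$, $w_{k+1}=M^{-1}Aq_{k+1}-\beta_{k+1}v_k$, $r_{k+1}=q_{k+1}-(\beta_{k+1}/\alpha_k)r_k$, $s_{k+1}=Cr_{k+1}$, $\alpha_{k+1}=(w_{k+1}^TMw_{k+1}+r_{k+1}^Ts_{k+1})^{1/2}$,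 $v_{k+1}=w_{k+1}/\alpha_{k+1}$, $t_{k+1}=s_{k+1}/\alpha_{k+1}$, $\zeta_{k+1}=-(\beta_{k+1}/\alpha_{k+1})\zeta_k$, $u^{(k+1)}=u^{(k)}+\zeta_{k+1}v_{k+1}$, $p^{(k+1)}=p^{(k)}-(\zeta_{k+1}/\alpha_{k+1})r_{k+1}$. *)

(* Defs.v *)
(* Scalars: an arbitrary real closed field R (needed for
   Num.sqrt); the paper's setting is R = the reals, which is an rcfType. *)
From HB Require Import structures.
From mathcomp Require Import all_boot all_order all_algebra.
Set Implicit Arguments. Unset Strict Implicit. Unset Printing Implicit Defensive.
Import Order.TTheory GRing.Theory Num.Theory.
Local Open Scope ring_scope.

Section Craig.
Variable R : rcfType.

Definition qform (p : nat) (G : 'M[R]_p) (x : 'cV[R]_p) : R := (x^T *m G *m x) 0 0.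

Definition normG (p : nat) (G : 'M[R]_p) (x : 'cV[R]_p) : R := Num.sqrt (qform G x).

Definition is_sym (p : nat) (G : 'M[R]_p) : Prop := G^T = G.
Definition is_spd (p : nat) (G : 'M[R]_p) : Prop :=
  is_sym G /\ forall x : 'cV[R]_p, x != 0 -> 0 < qform G x.
Definition is_spsd (p : nat) (G : 'M[R]_p) : Prop :=
  is_sym G /\ forall x : 'cV[R]_p, 0 <= qform G x.

(* State of the CRAIG recurrence at (1-based) index j:
   q_j, r_j, v_j, t_j, alpha_j, beta_j (beta_1 = ||b||_{N^{-1}}). *)
Record craig_state (m n : nat) := CraigState {
  cq : 'cV[R]_n; cr : 'cV[R]_n; cv : 'cV[R]_m; ct : 'cV[R]_n;
  calpha : R; cbeta : R }.

Variables (m n : nat) (M : 'M[R]_m) (A : 'M[R]_(m, n)) (C N : 'M[R]_n)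
          (b : 'cV[R]_n).

Definition craig_init : craig_state m n :=
  let beta1 := normG (invmx N) b in
  let q1 := beta1^-1 *: (invmx N *m b) in
  let r1 := q1 in
  let w1 := invmx M *m A *m q1 in
  let s1 := C *m r1 in
  let alpha1 := Num.sqrt (qform M w1 + (r1^T *m s1) 0 0) in
  CraigState (q1) r1 (alpha1^-1 *: w1) (alpha1^-1 *: s1) alpha1 beta1.

Definition craig_g (s : craig_state m n) : 'cV[R]_n :=
  invmx N *m (A^T *m cv s + ct s) - calpha s *: cq s.

Definition craig_step (s : craig_state m n) : craig_state m n :=
  let g := craig_g s in
  let beta' := normG N g in
  let q' := beta'^-1 *: g in
  let w' := invmx M *m A *m q' - beta' *: cv s in
  let r' := q' - (beta' / calpha s) *: cr s in
  let s' := C *m r' in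
  let alpha' := Num.sqrt (qform M w' + (r'^T *m s') 0 0) in
  CraigState q' r' (alpha'^-1 *: w') (alpha'^-1 *: s') alpha' beta'.

(* craig j = state with (1-based) index j+1 *)
Fixpoint craig (j : nat) : craig_state m n :=
  match j with 0 => craig_init | j'.+1 => craig_step (craig j') end.

Definition alpha_ (j : nat) := calpha (craig j.-1).
Definition beta_ (j : nat) := cbeta (craig j.-1).

Definition Qmat (k : nat) : 'M[R]_(n, k) := \matrix_(i < n, j < k) cq (craig j) i 0.
Definition Vmat (k : nat) : 'M[R]_(m, k) := \matrix_(i < m, j < k) cv (craig j) i 0.
Definition Tmat (k : nat) : 'M[R]_(n, k) := \matrix_(i < n, j < k) ct (craig j) i 0.
Definition Dmat (k : nat) : 'M[R]_(n, k) :=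
  \matrix_(i < n, j < k) (cr (craig j) i 0 / calpha (craig j)).
Definition Bmat (k : nat) : 'M[R]_k :=
  \matrix_(i < k, j < k)
    (if i == j then calpha (craig i)
     else if (j : nat) == i.+1 then cbeta (craig j) else 0).
Definition unit_last (k : nat) : 'cV[R]_k := \col_(j < k) ((j : nat) == k.-1)%:R.

End Craig.

(* Main.v *)
Require Import Defs.
From HB Require Import structures.
From mathcomp Require Import all_boot all_order all_algebra.
From mathcomp Require Import ring.
Import Order.TTheory GRing.Theory Num.Theory.
Set Implicit Arguments. Unset Strict Implicit. Unset Printing Implicit Defensive.
Local Open Scope ring_scope.
Section Gen.
Variable R : rcfType.

Definition matF (p k : nat) (f : nat -> 'cV[R]_p) : 'M[R]_(p, k) :=
  \matrix_(i < p, j < k) f j i 0.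

Lemma eq_matF p k (f h : nat -> 'cV[R]_p) :
  (forall j, (j < k)%N -> f j = h j) -> matF k f = matF k h.
Proof.
move=> H; apply/matrixP => i j; rewrite !mxE (H j) //.
Qed.

Lemma matF_mul p p' k (P : 'M[R]_(p', p)) (f : nat -> 'cV[R]_p) :
  P *m matF k f = matF k (fun j => P *m f j).
Proof.
apply/matrixP => i j; rewrite !mxE; apply: eq_bigr => l _; rewrite !mxE //.
Qed.

Lemma matF_add p k (f h : nat -> 'cV[R]_p) :
  matF k f + matF k h = matF k (fun j => f j + h j).
Proof. by apply/matrixP => i j; rewrite !mxE. Qed.

Definition ip p (G : 'M[R]_p) (x y : 'cV[R]_p) : R := (x^T *m G *m y) 0 0.

Lemma matF_gram p k (G : 'M[R]_p) (f h : nat -> 'cV[R]_p) :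
  (matF k f)^T *m G *m matF k h = \matrix_(i < k, j < k) ip G (f i) (h j).
Proof.
apply/matrixP => i j; rewrite !mxE /ip mxE; apply: eq_bigr => l _.
rewrite !mxE; congr (_ * _); apply: eq_bigr => l' _; rewrite !mxE //.
Qed.

Section IP.
Variables (p : nat) (G : 'M[R]_p).
Implicit Types x y z : 'cV[R]_p.
Lemma ipDr x y z : ip G x (y + z) = ip G x y + ip G x z.
Proof. by rewrite /ip mulmxDr !mxE. Qed.
Lemma ipBr x y z : ip G x (y - z) = ip G x y - ip G x z.
Proof. by rewrite /ip mulmxBr !mxE. Qed.
Lemma ipZr x y c : ip G x (c *: y) = c * ip G x y.
Proof. by rewrite /ip -scalemxAr !mxE. Qed.
Lemma ipDl x y z : ip G (x + y) z = ip G x z + ip G y z.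
Proof. by rewrite /ip linearD /= !mulmxDl !mxE. Qed.
Lemma ipBl x y z : ip G (x - y) z = ip G x z - ip G y z.
Proof. by rewrite /ip linearB /= !mulmxBl !mxE. Qed.
Lemma ipZl x y c : ip G (c *: x) y = c * ip G x y.
Proof. by rewrite /ip linearZ /= -!scalemxAl !mxE. Qed.
Lemma ip0r x : ip G x 0 = 0.
Proof. by rewrite /ip mulmx0 !mxE. Qed.
Lemma ipC x y : G^T = G -> ip G x y = ip G y x.
Proof.
move=> sG; rewrite /ip.
have -> : (x^T *m G *m y) 0 0 = ((x^T *m G *m y)^T) 0 0 by rewrite [RHS]mxE.
by rewrite !trmx_mul trmxK sG mulmxA.
Qed.
End IP.

End Gen.

Section Spd.
Variable R : rcfType.
Lemma spd_unit p (G : 'M[R]_p) : is_spd G -> G \in unitmx.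
Proof.
move=> [sG pG]; rewrite unitmxE unitfE; apply/negP => /det0P [v vnz vG].
have := pG v^T; rewrite trmx_eq0 vnz => /(_ isT).
by rewrite /qform trmxK vG !mul0mx mxE ltxx.
Qed.
Lemma spd_psd p (G : 'M[R]_p) : is_spd G -> forall x, 0 <= qform G x.
Proof.
move=> [_ pG] x; case: (eqVneq x 0) => [->|/pG/ltW //].
by rewrite /qform mulmx0 mxE.
Qed.
End Spd.
Section Craig2.
Variable R : rcfType.
Variables (m n : nat) (M : 'M[R]_m) (A : 'M[R]_(m, n)) (C N : 'M[R]_n) (b : 'cV[R]_n).
Local Notation st j := (craig M A C N b j).
Local Notation qq j := (cq (st j)).
Local Notation rr j := (cr (st j)).
Local Notation vv j := (cv (st j)).
Local Notation tt j := (ct (st j)).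
Local Notation al j := (calpha (st j)).
Local Notation be j := (cbeta (st j)).

Lemma colB k p (f : nat -> 'cV[R]_p) : matF k f *m Bmat M A C N b k =
  matF k (fun j => al j *: f j + (if (0 < j)%N then be j *: f j.-1 else 0)).
Proof.
apply/matrixP => l j; rewrite !mxE (bigD1 j) //= !mxE eqxx.
rewrite [in RHS]mulrC; congr (_ + _).
have E : forall i : 'I_k, i != j -> matF k f l i * Bmat M A C N b k i j =
   f i l 0 * (if (j : nat) == i.+1 then be j else 0).
  by move=> i /negbTE hij; rewrite !mxE hij.
rewrite (eq_bigr _ E).
case: j E => [[|j] hj] E /=.
  by rewrite big1 ?mxE // => i _; rewrite mulr0.
have hj' : (j < k)%N by apply: ltnW.
rewrite (bigD1 (Ordinal hj')) /=; last by rewrite -val_eqE /= neq_ltn ltnSn.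
rewrite eqxx big1 ?addr0; first by rewrite !mxE mulrC.
move=> i /andP[_ /negbTE hi]; rewrite -val_eqE /= in hi.
by case: eqP => [[e]|]; [rewrite e eqxx in hi | rewrite mulr0].
Qed.

Lemma colBt k p (f : nat -> 'cV[R]_p) : matF k f *m (Bmat M A C N b k)^T =
  matF k (fun j => al j *: f j + (if (j.+1 < k)%N then be j.+1 *: f j.+1 else 0)).
Proof.
apply/matrixP => l j; rewrite !mxE (bigD1 j) //= !mxE eqxx.
rewrite [in RHS]mulrC; congr (_ + _).
have E : forall i : 'I_k, i != j -> matF k f l i * (Bmat M A C N b k)^T i j =
   f i l 0 * (if (i : nat) == j.+1 then be i else 0).
  by move=> i hij; rewrite !mxE eq_sym (negbTE hij).
rewrite (eq_bigr _ E).
case: ifP => hj.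
  rewrite (bigD1 (Ordinal hj)) /=; last by rewrite -val_eqE /= eq_sym neq_ltn ltnSn.
  rewrite eqxx big1 ?addr0; first by rewrite !mxE mulrC.
  move=> i /andP[_ /negbTE hi]; rewrite -val_eqE /= in hi.
  by case: eqP => [e|]; [rewrite e eqxx in hi | rewrite mulr0].
rewrite big1 ?mxE // => i _.
case: eqP => [e|]; last by rewrite mulr0.
by move: (ltn_ord i); rewrite e hj.
Qed.


Definition dd j := (al j)^-1 *: rr j.
Definition gg j := craig_g A N (st j).
Definition ww j := invmx M *m A *m qq j - (if j is j'.+1 then be j *: vv j' else 0).

Lemma qS j : qq j.+1 = (be j.+1)^-1 *: gg j. Proof. by []. Qed.
Lemma beS j : be j.+1 = normG N (gg j). Proof. by []. Qed.
Lemma rS j : rr j.+1 = qq j.+1 - be j.+1 *: dd j. Proof. by rewrite /dd scalerA. Qed.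
Lemma r0 : rr 0 = qq 0. Proof. by []. Qed.
Lemma q0E : qq 0 = (be 0)^-1 *: (invmx N *m b). Proof. by []. Qed.
Lemma be0E : be 0 = normG (invmx N) b. Proof. by []. Qed.
Lemma tE j : tt j = C *m dd j.
Proof. by case: j => [|j] /=; rewrite /dd scalemxAr. Qed.
Lemma vE j : vv j = (al j)^-1 *: ww j.
Proof. by case: j => [|j]; rewrite /ww ?subr0. Qed.
Lemma alE j : al j = Num.sqrt (qform M (ww j) + ip C (rr j) (rr j)).
Proof. by case: j => [|j]; rewrite /ww ?subr0 /ip -[_^T *m C *m _]mulmxA. Qed.
Lemma gE j : gg j = invmx N *m (A^T *m vv j + C *m dd j) - al j *: qq j.
Proof. by rewrite /gg /craig_g tE. Qed.

Lemma sqrt_norm (X : R) : 0 <= X -> Num.sqrt X != 0 ->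
  (Num.sqrt X)^-1 * ((Num.sqrt X)^-1 * X) = 1.
Proof.
move=> X0 nz; rewrite -{3}(sqr_sqrtr X0) expr2 mulKf // mulVf //.
Qed.

Section Hyps.
Hypotheses (Msym : M^T = M) (Csym : C^T = C) (Nsym : N^T = N).
Hypotheses (Mu : M \in unitmx) (Nu : N \in unitmx).
Hypotheses (Mpsd : forall x, 0 <= qform M x) (Cpsd : forall x, 0 <= qform C x).
Hypotheses (Npd : forall x, x != 0 -> 0 < qform N x) (bnz : b != 0).
Variable k : nat.
Hypothesis ha : forall j, (j < k)%N -> al j != 0.
Hypothesis hb : forall j, (0 < j < k)%N -> be j != 0.

Lemma Npsd x : 0 <= qform N x.
Proof.
case: (eqVneq x 0) => [->|/Npd/ltW //]; by rewrite /qform mulmx0 mxE.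
Qed.

Lemma relv j : (j < k)%N -> al j *: vv j = ww j.
Proof. by move=> h; rewrite vE scalerA mulfV ?scale1r // ha. Qed.
Lemma reld j : (j < k)%N -> al j *: dd j = rr j.
Proof. by move=> h; rewrite /dd scalerA mulfV ?scale1r // ha. Qed.
Lemma relq j : (j.+1 < k)%N -> be j.+1 *: qq j.+1 = gg j.
Proof. by move=> h; rewrite qS scalerA mulfV ?scale1r // hb. Qed.

Lemma normY j : (j < k)%N -> ip M (vv j) (vv j) + ip C (dd j) (dd j) = 1.
Proof.
move=> h; rewrite vE /dd !ipZl !ipZr -!mulrDr.
have := ha h; rewrite alE => nz.
change (ip M (ww j) (ww j)) with (qform M (ww j)).
rewrite sqrt_norm //; exact: addr_ge0 (Mpsd _) (Cpsd _).
Qed.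

Lemma normQ j : (j < k)%N -> ip N (qq j) (qq j) = 1.
Proof.
case: j => [|j] h.
  rewrite q0E be0E /normG ipZl ipZr.
  set y := invmx N *m b.
  have E : qform (invmx N) b = ip N y y.
    rewrite /ip /y /qform trmx_mul trmx_inv Nsym.
    by rewrite -!mulmxA (mulmxA N) mulmxV // mul1mx.
  have ynz : y != 0.
    apply: contra bnz => /eqP y0; apply/eqP.
    by rewrite -(mulKVmx Nu b) -/y y0 mulmx0.
  rewrite E sqrt_norm //; first exact: ltW (Npd ynz).
  by rewrite sqrtr_eq0 -ltNge Npd.
rewrite qS beS /normG ipZl ipZr sqrt_norm //; first exact: Npsd.
by have := hb (j:=j.+1); rewrite beS /normG; apply.
Qed.

Lemma ipadj x y z :
  ip M (invmx M *m A *m x) y + ip C x z = ip N x (invmx N *m (A^T *m y + C *m z)).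
Proof.
rewrite /ip mulmxA -(mulmxA _ N) mulmxV // mulmx1 mulmxDr [in RHS]mxE.
congr (_ + _); last by rewrite mulmxA.
by rewrite !trmx_mul trmx_inv Msym !mulmxA -(mulmxA _ (invmx M)) mulVmx // mulmx1.
Qed.

Lemma Ainv_q i : (i < k)%N ->
  invmx M *m A *m qq i = al i *: vv i + (if i is i'.+1 then be i *: vv i' else 0).
Proof. by move=> h; rewrite relv // /ww subrK. Qed.

Lemma q_exp i : (i < k)%N ->
  qq i = al i *: dd i + (if i is i'.+1 then be i *: dd i' else 0).
Proof. by move=> h; rewrite reld //; case: i h => [|i] h; rewrite ?addr0 // rS subrK. Qed.

Lemma Ninv_v i : (i.+1 < k)%N ->
  invmx N *m (A^T *m vv i + C *m dd i) = al i *: qq i + be i.+1 *: qq i.+1.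
Proof. by move=> h; rewrite relq // gE [RHS]addrC subrK. Qed.

Lemma ip0l p (G : 'M[R]_p) x : ip G 0 x = 0.
Proof. by rewrite /ip trmx0 !mul0mx mxE. Qed.

Lemma adjY i y d : (i < k)%N ->
  ip M (invmx M *m A *m qq i) y + ip C (qq i) d =
  al i * (ip M (vv i) y + ip C (dd i) d) +
  (if i is i'.+1 then be i * (ip M (vv i') y + ip C (dd i') d) else 0).
Proof.
move=> h; rewrite Ainv_q // [in ip C _ _]q_exp //.
case: i h => [|i] h; rewrite !ipDl ?ip0l !ipZl; ring.
Qed.

Lemma ortho j : (j < k)%N -> forall i, (i <= j)%N ->
  ip N (qq i) (qq j) = (i == j)%:R /\ ip M (vv i) (vv j) + ip C (dd i) (dd j) = (i == j)%:R.
Proof.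
elim/ltn_ind: j => j IH hjk.
have full : forall i i', (i < j)%N -> (i' < j)%N ->
    ip N (qq i) (qq i') = (i == i')%:R /\ ip M (vv i) (vv i') + ip C (dd i) (dd i') = (i == i')%:R.
  move=> i i' hi hi'; case: (leqP i i') => hii.
    exact: IH hi' (ltn_trans hi' hjk) i hii.
  have [E1 E2] := IH i hi (ltn_trans hi hjk) i' (ltnW hii).
  by rewrite ipC // E1 ipC // [ip C _ _]ipC // E2 eq_sym.
have Qpart : forall i, (i <= j)%N -> ip N (qq i) (qq j) = (i == j)%:R.
  move=> i; rewrite leq_eqVlt => /orP[/eqP -> | hij]; first by rewrite eqxx normQ.
  rewrite (ltn_eqF hij).
  case: j IH hjk full hij => [|j] IH hjk full hij //.
  have hb' : be j.+1 != 0 by apply: hb; rewrite hjk.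
  apply: (mulfI hb'); rewrite mulr0 -ipZr relq // gE ipBr ipZr -ipadj.
  rewrite adjY; last exact: ltn_trans hjk.
  have [hq hy] := full i j hij (ltnSn j).
  rewrite hq hy.
  case: i hij hq hy => [|i] hij hq hy.
    by case: eqP => [<-|_] /=; ring.
  have [_ hy'] := full i j (ltn_trans (ltnSn i) hij) (ltnSn j).
  rewrite hy' (ltn_eqF (hij : (i < j)%N)) mulr0 addr0.
  by case: eqP => [<-|_] /=; ring.
move=> i hi; split; first exact: Qpart.
move: hi; rewrite leq_eqVlt => /orP[/eqP -> | hij]; first by rewrite eqxx normY.
rewrite (ltn_eqF hij).
case: j IH hjk full Qpart hij => [|j] IH hjk full Qpart hij //.
apply: (mulfI (ha hjk)); rewrite mulr0 mulrDr -!ipZr relv // reld //.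
rewrite /ww (rS j) !ipBr (ipZr M (vv i) (vv j)) (ipZr C (dd i) (dd j)) (ipC (vv i)) // (ipC (dd i) (qq _)) //.

rewrite addrACA -opprD -mulrDr ipadj Ninv_v; last exact: leq_ltn_trans hij hjk.
rewrite ipDr (ipZr N _ (qq i)) (ipZr N _ (qq i.+1)) (ipC (qq _) (qq i)) // Qpart ?(ltnW hij) // (ltn_eqF hij) mulr0 add0r.
have [_ hy] := full i j hij (ltnSn j).
rewrite hy.
move: hij; rewrite ltnS leq_eqVlt => /orP[/eqP -> | hij].
  by rewrite normQ // eqxx mulr1 subrr.
rewrite (ipC (qq _) (qq i.+1)) // Qpart ?eqSS ?(ltn_eqF hij) ?mulr0 ?subrr //; exact: ltnW.
Qed.

Lemma QE : Qmat M A C N b k = matF k (fun j => qq j). Proof. by []. Qed.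
Lemma VE : Vmat M A C N b k = matF k (fun j => vv j). Proof. by []. Qed.
Lemma DE : Dmat M A C N b k = matF k dd.
Proof. by apply/matrixP => i j; rewrite !mxE mulrC. Qed.
Lemma TE : Tmat M A C N b k = matF k (fun j => C *m dd j).
Proof. by apply/matrixP => i j; rewrite [LHS]mxE [RHS]mxE tE. Qed.

Lemma res1 : Qmat M A C N b k = Dmat M A C N b k *m Bmat M A C N b k.
Proof.
rewrite QE DE colB; apply: eq_matF => j hj; rewrite q_exp //.
by case: j hj.
Qed.

Lemma res2 : A *m Qmat M A C N b k = M *m Vmat M A C N b k *m Bmat M A C N b k.
Proof.
rewrite QE VE !matF_mul colB; apply: eq_matF => j hj.
have -> : A *m qq j = M *m (invmx M *m A *m qq j) by rewrite -mulmxA mulKVmx.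
rewrite Ainv_q // mulmxDr -scalemxAr.
by case: j hj => [|j] hj /=; rewrite ?mulmx0 ?scalemxAr.
Qed.

Lemma res3 : C *m Qmat M A C N b k = Tmat M A C N b k *m Bmat M A C N b k.
Proof.
rewrite QE TE !matF_mul colB; apply: eq_matF => j hj.
rewrite {1}q_exp // mulmxDr -scalemxAr.
by case: j hj => [|j] hj /=; rewrite ?mulmx0 ?scalemxAr.
Qed.

Lemma res4 : (Vmat M A C N b k)^T *m M *m Vmat M A C N b k +
   (Dmat M A C N b k)^T *m Tmat M A C N b k = 1%:M.
Proof.
rewrite VE DE TE -matF_mul [_^T *m (C *m _)]mulmxA !matF_gram.
apply/matrixP => i j; rewrite !mxE.
case: (leqP i j) => h.
  by have [_ ->] := ortho (ltn_ord j) h.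
have [_ E] := ortho (ltn_ord i) (ltnW h).
by rewrite ipC // [ip C _ _]ipC // E eq_sym.
Qed.

Lemma res5 : (Qmat M A C N b k)^T *m N *m Qmat M A C N b k = 1%:M.
Proof.
rewrite QE matF_gram.
apply/matrixP => i j; rewrite !mxE.
case: (leqP i j) => h.
  by have [-> _] := ortho (ltn_ord j) h.
have [E _] := ortho (ltn_ord i) (ltnW h).
by rewrite ipC // E eq_sym.
Qed.

Lemma gemat p (P : 'M[R]_(p, n)) g :
  P *m g *m (unit_last R k)^T = matF k (fun j => (j == k.-1)%:R *: (P *m g)).
Proof.
by apply/matrixP => i j; rewrite !mxE big_ord1 !mxE mulrC.
Qed.

Lemma res6 : A^T *m Vmat M A C N b k + Tmat M A C N b k =
  N *m Qmat M A C N b k *m (Bmat M A C N b k)^T +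
  N *m craig_g A N (craig M A C N b k.-1) *m (unit_last R k)^T.
Proof.
rewrite VE TE QE matF_mul matF_mul colBt gemat !matF_add.
apply: eq_matF => j hj.
have E : A^T *m vv j + C *m dd j = N *m gg j + al j *: (N *m qq j).
  by rewrite gE mulmxBr mulKVmx // scalemxAr subrK.
rewrite E; case: ifP => h.
  have hne : (j == k.-1) = false by apply: ltn_eqF; rewrite ltn_predRL.
  by rewrite hne scale0r addr0 -(relq h) [be j.+1 *: (N *m _)]scalemxAr addrC.
have ek : k = j.+1 by apply/eqP; rewrite eqn_leq hj leqNgt h.
by rewrite ek /= eqxx scale1r addr0 addrC.
Qed.

Lemma eB : (0 < k)%N ->
  (unit_last R k)^T *m Bmat M A C N b k = al k.-1 *: (unit_last R k)^T.
Proof.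
move=> hk; have hk' : (k.-1 < k)%N by rewrite ltn_predL.
apply/matrixP => i j; rewrite !mxE (bigD1 (Ordinal hk')) //= big1; last first.
  move=> l hl; rewrite !mxE.
  by case: eqP => [e|]; [rewrite -val_eqE /= e eqxx in hl | rewrite mul0r].
rewrite !mxE eqxx mul1r addr0 -val_eqE /=.
case: (eqVneq (j : nat) k.-1) => [e|ne].
  by rewrite /= mulr1n mulr1.
rewrite /= mulr0n mulr0.
case: eqP => // e; move: (ltn_ord j); rewrite e prednK // ltnn //.
Qed.

Lemma res7 : (0 < k)%N ->
  invmx N *m (A^T *m invmx M *m A + C) *m Qmat M A C N b k =
  Qmat M A C N b k *m ((Bmat M A C N b k)^T *m Bmat M A C N b k) +
  al k.-1 *: (craig_g A N (craig M A C N b k.-1) *m (unit_last R k)^T).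
Proof.
move=> hk.
have SQ : (A^T *m invmx M *m A + C) *m Qmat M A C N b k =
    (A^T *m Vmat M A C N b k + Tmat M A C N b k) *m Bmat M A C N b k.
  rewrite mulmxDl res3 -(mulmxA _ A) res2 -(mulmxA (A^T) (invmx M)) -(mulmxA M) mulKmx //.
  by rewrite mulmxA mulmxDl.
rewrite -mulmxA SQ res6 mulmxDl mulmxDr -!mulmxA !mulKmx // eB //.
by rewrite -scalemxAr.
Qed.

End Hyps.
End Craig2.

Theorem mainTheorem2 (R : rcfType) (m n : nat) (M : 'M[R]_m) (A : 'M[R]_(m, n))
    (C N : 'M[R]_n) (b : 'cV[R]_n) (k : nat) :
  (n <= m)%N ->
  is_spd M -> \rank A = n -> is_spsd C -> b != 0 -> is_spd N ->
  (0 < k)%N ->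
  (* the recurrence is defined up to index k: alpha_1..alpha_k nonzero
     (so divisions are legitimate) and beta_2..beta_k nonzero (no stop) *)
  (forall j, (1 <= j <= k)%N -> alpha_ M A C N b j != 0) ->
  (forall j, (2 <= j <= k)%N -> beta_ M A C N b j != 0) ->
  let Q := Qmat M A C N b k in
  let V := Vmat M A C N b k in
  let T := Tmat M A C N b k in
  let D := Dmat M A C N b k in
  let B := Bmat M A C N b k in
  let gk := craig_g A N (craig M A C N b k.-1) in
  let ek := unit_last R k in
  let S := A^T *m invmx M *m A + C in
  Q = D *m B /\
  A *m Q = M *m V *m B /\
  C *m Q = T *m B /\
  V^T *m M *m V + D^T *m T = 1%:M /\
  Q^T *m N *m Q = 1%:M /\
  A^T *m V + T = N *m Q *m B^T + N *m gk *m ek^T /\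
  invmx N *m S *m Q = Q *m (B^T *m B) + alpha_ M A C N b k *: (gk *m ek^T).
Proof.
move=> hnm hM rkA [Csym Cpsd] bnz hN hk ha hb Q V T D B gk ek S.
have Mu := spd_unit hM; have Nu := spd_unit hN.
have Mpsd := spd_psd hM.
case: hM => Msym _; case: hN => Nsym Npd.
have ha' : forall j, (j < k)%N -> calpha (craig M A C N b j) != 0.
  by move=> j hj; apply: (ha j.+1).
have hb' : forall j, (0 < j < k)%N -> cbeta (craig M A C N b j) != 0.
  by move=> j /andP[h1 h2]; apply: (hb j.+1); rewrite ltnS h1 h2.
rewrite {}/Q {}/V {}/T {}/D {}/B {}/gk {}/ek {}/S.
split; first by apply: res1; assumption.
split; first by apply: res2; assumption.
split; first by apply: res3; assumption.
split; first by apply: res4; assumption.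
split; first by apply: res5; assumption.
split; first by apply: res6; assumption.
by apply: res7; assumption.
Qed.
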